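(* With the notation of the context (a unital partition $\mathcal{P}$ of $G=\mu_{p^n}$, $p$ odd prime, and the sets $A_{i,k}$, $B_{j,k}$ and integer $u_k$ attached to a fixed $A\in\mathcal{P}_k$ and $y\in A\cap B_k$), if $B_{j,k}\subseteq A_{i,k}$ then $j\equiv i\pmod{u_k}$.
   Context: A unital partition of a finite commutative group $G$ is a partition $G=\{1\}\sqcup A_0\sqcup\dots\sqcup A_s$ such that, with $a_i=\sum_{x\in A_i}x\in\mathbb{Z}[G]$, the $\mathbb{Z}$-span of $1$ and the $a_i$ is closed under multiplication in $\mathbb{Z}[G]$. Fix $\alpha$ an integer generating $(\mathbb{Z}/p^n\mathbb{Z})^\times$. $B_k=\{x^{p^k}\mid x\text{ a generator of }G\}$, $\mathcal{P}_k=\{A\in\mathcal{P}\mid A\cap B_k\neq\emptyset\}$. Fix $A\in\mathcal{P}_k$, $y\in A\cap B_k$; $u_k$ is the smallest positive integer with $y^{\alpha^{u_k}}\in A$, $\beta_k=\alpha^{u_k}$, $r_k+1=\phi(p^{n-k})/u_k$. For $X\subseteq G$, $X^m=\{x^m:x\in X\}$. $A_{i,k}=A^{\alpha^i}$, $B_{0,k}=\{y,y^{\beta_k},\dots,y^{\beta_k^{r_k}}\}$, $B_{i,k}=B_{0,k}^{\alpha^i}$. *)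

(* Defs.v *)
From HB Require Import structures.
From mathcomp Require Import all_boot all_order all_algebra all_fingroup all_solvable.
Set Implicit Arguments. Unset Strict Implicit. Unset Printing Implicit Defensive.
Import GRing.Theory.

(* Elements of the group ring Z[G] are represented as functions gT -> int
   (supported in G).  The product in Z[G] is convolution over G. *)
Definition grconv (gT : finGroupType) (G : {set gT}) (f g : gT -> int) : gT -> int :=
  fun z => (\sum_(x in G) f x * g (x^-1 * z)%g)%R.

(* Indicator of a subset, i.e. the group-ring element sum_{x in A} x. *)
Definition grind (gT : finGroupType) (A : {set gT}) : gT -> int :=
  fun z => Posz ((z \in A) : nat).

Definition in_Zspan (gT : finGroupType) (P : {set {set gT}}) (h : gT -> int) : Prop :=
  exists (c0 : int) (c : {set gT} -> int),
    forall z, h z = (c0 * grind [set 1%g] z + \sum_(B in P) c B * grind B z)%R.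

Definition unital_partition (gT : finGroupType) (G : {set gT}) (P : {set {set gT}}) : Prop :=
  partition P (G :\ 1%g) /\
  forall h1 h2, in_Zspan P h1 -> in_Zspan P h2 -> in_Zspan P (grconv G h1 h2).

Definition unit_generator (m alpha : nat) : Prop :=
  coprime alpha m /\ forall x, coprime x m -> exists i, x = alpha ^ i %[mod m].

Definition setpow (gT : finGroupType) (X : {set gT}) (m : nat) : {set gT} :=
  [set (x ^+ m)%g | x in X].

Definition Bset (gT : finGroupType) (G : {set gT}) (p k : nat) : {set gT} :=
  [set (x ^+ (p ^ k))%g | x in G & generator G x].

(* Main.v *)
Require Import Defs.
From HB Require Import structures.
From mathcomp Require Import all_boot all_order all_algebra all_fingroup all_solvable.
Set Implicit Arguments. Unset Strict Implicit. Unset Printing Implicit Defensive.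
Import GRing.Theory.
Local Open Scope ring_scope.

Definition Rm (gT : finGroupType) (q : nat) (f : gT -> int) : 'M['F_q]_#|gT| :=
  \matrix_(i, j) (f ((@enum_val gT predT i)^-1 * enum_val j)%g)%:~R.

Lemma Rm_mul (gT : finGroupType) (G : {group gT}) q (f g : gT -> int) :
  (forall x, x \notin G -> f x = 0) ->
  Rm q (grconv G f g) = Rm q f *m Rm q g.
Proof.
move=> fG; apply/matrixP=> i j; rewrite !mxE /grconv rmorph_sum /=.
set a := enum_val i; set b := enum_val j.
rewrite [RHS](eq_bigr (fun k => (f (a^-1 * enum_val k)%g)%:~R * (g ((enum_val k)^-1 * b)%g)%:~R)); last by move=> k _; rewrite !mxE.
rewrite -(big_enum_val (A := predT) (fun k => (f (a^-1 * k)%g)%:~R * (g (k^-1 * b)%g)%:~R)) /=.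
rewrite [RHS](reindex_inj (mulgI a)) /=.
rewrite [RHS](bigID (fun x => x \in G)) /= [X in _ + X]big1 ?addr0; last first.
  by move=> x /fG; rewrite mulKg => ->; rewrite mul0r.
apply: eq_bigr => x _.
by rewrite mulKg invMg -mulgA intrM.
Qed.

Lemma Rm_ext (gT : finGroupType) q (f g : gT -> int) :
  (forall z, f z = g z) -> Rm q f = Rm q g.
Proof. by move=> e; apply/matrixP=> i j; rewrite !mxE e. Qed.

Lemma Rm_delta1 (gT : finGroupType) q : Rm q (grind [set 1%g : gT]) = 1.
Proof.
apply/matrixP=> i j; rewrite !mxE /grind in_set1 -eq_mulVg1 (inj_eq enum_val_inj).
by case: (i == j).
Qed.

Lemma conv_delta (gT : finGroupType) (G : {group gT}) (x y : gT) :
  x \in G -> forall z,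
  grconv G (grind [set x]) (grind [set y]) z = grind [set (x * y)%g] z.
Proof.
move=> xG z; rewrite /grconv (bigD1 x) //= big1 ?addr0; last first.
  by move=> w /andP[_ /negbTE]; rewrite /grind in_set1 => ->; rewrite mul0r.
rewrite /grind !in_set1 eqxx mul1r; congr (Posz (nat_of_bool _)).
by apply/eqP/eqP=> [<-|->]; rewrite ?mulKVg ?mulKg.
Qed.

Definition Em (gT : finGroupType) q (x : gT) := Rm q (grind [set x]).

Lemma grind_supp (gT : finGroupType) (G : {group gT}) (C : {set gT}) :
  C \subset G -> forall x, x \notin G -> grind C x = 0.
Proof.
move=> CG x xG; rewrite /grind; case: (boolP (x \in C)) => // /(subsetP CG).
by rewrite (negbTE xG).
Qed.

Lemma Em_mul (gT : finGroupType) (G : {group gT}) q (x y : gT) :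
  x \in G -> Em q x * Em q y = Em q (x * y)%g.
Proof.
move=> xG; rewrite /Em -mulmxE -(Rm_mul (G := G)).
  by apply: Rm_ext => z; apply: conv_delta.
by apply: (grind_supp (G := G)); rewrite sub1set.
Qed.

Lemma Em_exp (gT : finGroupType) (G : {group gT}) q (x : gT) r :
  x \in G -> Em q x ^+ r = Em q (x ^+ r)%g.
Proof.
move=> xG; elim: r => [|r IH]; first by rewrite expr0 expg0 /Em Rm_delta1.
by rewrite exprSr IH (Em_mul _ _ (groupX r xG)) expgSr.
Qed.

Lemma frob2 (R : pzRingType) q (x y : R) :
  prime q -> q%:R = 0 :> R -> GRing.comm x y -> (x + y) ^+ q = x ^+ q + y ^+ q.
Proof.
move=> pq q0 cxy; rewrite exprDn_comm // (bigD1 ord0) //= (bigD1 ord_max) //=.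
rewrite big1 ?addr0; last first.
  move=> i /andP[i0 iM]; have /dvdnP[m ->] : (q %| 'C(q, i))%N.
    apply: prime_dvd_bin => //; rewrite lt0n; apply/andP; split.
      by apply: contra i0 => /eqP i0; apply/eqP/val_inj.
    rewrite ltn_neqAle -ltnS ltn_ord andbT; apply: contra iM => /eqP iM.
    by apply/eqP/val_inj.
  by rewrite mulrnA -mulr_natr q0 mulr0.
rewrite subn0 expr0 mulr1 bin0 subnn expr0 mul1r binn !mulr1n //.
by rewrite -(inj_eq val_inj) /= -lt0n prime_gt0.
Qed.

Lemma frob_sum (R : pzRingType) (I : eqType) (s : seq I) (F : I -> R) q :
  prime q -> q%:R = 0 :> R -> {in s &, forall a b, GRing.comm (F a) (F b)} ->
  (\sum_(a <- s) F a) ^+ q = \sum_(a <- s) F a ^+ q.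
Proof.
move=> pq q0; elim: s => [|a s IH] cs.
  by rewrite !big_nil expr0n eqn0Ngt prime_gt0.
rewrite !big_cons frob2 //; last first.
  rewrite big_seq; apply: commr_sum => b bs; apply: cs; by rewrite inE ?eqxx ?bs ?orbT.
by rewrite IH // => b c bs cs'; apply: cs; rewrite inE ?bs ?cs' orbT.
Qed.

Fixpoint hp (gT : finGroupType) (G : {set gT}) (h : gT -> int) (r : nat) : gT -> int :=
  match r with 0 => grind [set 1%g] | r'.+1 => grconv G (hp G h r') h end.

Lemma hp_supp (gT : finGroupType) (G : {group gT}) (h : gT -> int) r :
  (forall x, x \notin G -> h x = 0) -> forall x, x \notin G -> hp G h r x = 0.
Proof.
move=> hG; case: r => [|r] x xG /=.
  by apply: (grind_supp (G := G)) => //; rewrite sub1set group1.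
rewrite /grconv big1 // => w wG; rewrite hG ?mulr0 //.
by rewrite groupMl ?groupV.
Qed.

Lemma Rm_hp (gT : finGroupType) (G : {group gT}) q (h : gT -> int) r :
  (forall x, x \notin G -> h x = 0) -> Rm q (hp G h r) = Rm q h ^+ r.
Proof.
move=> hG; elim: r => [|r IH]; first by rewrite expr0 /= Rm_delta1.
by rewrite /= Rm_mul ?IH ?exprSr ?mulmxE //; apply: hp_supp.
Qed.

Lemma Rm_grind (gT : finGroupType) q (C : {set gT}) :
  Rm q (grind C) = \sum_(x in C) Em q x.
Proof.
apply/matrixP=> i j; rewrite summxE !mxE /grind.
set w := ((enum_val i)^-1 * enum_val j)%g.
under eq_bigr do rewrite /Em mxE /grind in_set1 -/w.
case: (boolP (w \in C)) => wC.
  rewrite (bigD1 w) //= eqxx big1 ?addr0 // => x /andP[_ /negbTE].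
  by rewrite eq_sym => ->.
rewrite big1 // => x xC; case: eqP => // ew; by rewrite ew xC in wC.
Qed.

Lemma q0M (gT : finGroupType) q : prime q -> q%:R = 0 :> 'M['F_q]_#|gT|.
Proof.
move=> pq; apply/matrixP=> i j; rewrite mulmxnE !mxE.
by rewrite -mulr_natr pchar_Fp_0 // mulr0.
Qed.

Lemma key_mod (gT : finGroupType) (G : {group gT}) q (C : {set gT}) :
  prime q -> abelian G -> C \subset G ->
  {in G &, injective (fun x => x ^+ q)%g} ->
  forall z, (hp G (grind C) q z)%:~R = ((z \in setpow C q) : nat)%:R :> 'F_q.
Proof.
move=> pq abG CG inj z.
have hG := grind_supp CG.
have := Rm_hp q q hG; rewrite Rm_grind -big_enum frob_sum //; first last.
- move=> a b; rewrite !mem_enum => /(subsetP CG) aG /(subsetP CG) bG.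
  rewrite /GRing.comm !(Em_mul _ _ aG) !(Em_mul _ _ bG).
  by rewrite (centsP abG).
- exact: q0M.
move=> /matrixP /(_ (enum_rank 1%g) (enum_rank z)).
rewrite summxE !mxE !enum_rankK invg1 mul1g => ->.
rewrite big_enum /=.
rewrite (eq_bigr (fun x => ((z == x ^+ q)%g : nat)%:R)); last first.
  move=> x /(subsetP CG) xG; rewrite (Em_exp _ _ xG) /Em !mxE !enum_rankK.
  by rewrite invg1 mul1g /grind in_set1.
case: (boolP (z \in setpow C q)) => [/imsetP[x0 x0C ->]|zC].
  rewrite (bigD1 x0) //= eqxx big1 ?addr0 // => x /andP[xC nx].
  case: eqP => // /(inj _ _ (subsetP CG _ x0C) (subsetP CG _ xC)) e.
  by rewrite e eqxx in nx.
rewrite big1 // => x xC; case: eqP => // ez.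
by move: zC; rewrite ez /setpow (imset_f (fun y => (y ^+ q)%g)) //.
Qed.

Lemma part_sub (gT : finGroupType) (G : {group gT}) (P : {set {set gT}}) C :
  partition P (G :\ 1%g) -> C \in P -> C \subset G :\ 1%g.
Proof.
move=> pP CP; rewrite -(cover_partition pP); exact: bigcup_sup.
Qed.

Lemma span_const (gT : finGroupType) (G : {group gT}) (P : {set {set gT}}) h D z w :
  partition P (G :\ 1%g) -> in_Zspan P h -> D \in P -> z \in D -> w \in D ->
  h z = h w.
Proof.
move=> pP [c0 [c hE]] DP zD wD.
have tP : trivIset P by case/and3P: pP.
have hev : forall x, x \in D -> h x = c D.
  move=> x xD; rewrite hE /grind in_set1.
  have /setD1P[/negbTE -> _] := subsetP (part_sub pP DP) x xD.
  rewrite mulr0 add0r (bigD1 D) //= xD mulr1 big1 ?addr0 // => B /andP[BP nBD].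
  case: (boolP (x \in B)) => xB; last by rewrite mulr0.
  by move: nBD; rewrite -(def_pblock tP BP xB) (def_pblock tP DP xD) eqxx.
by rewrite !hev.
Qed.

Lemma span_hp (gT : finGroupType) (G : {group gT}) (P : {set {set gT}}) C r :
  unital_partition G P -> C \in P -> in_Zspan P (hp G (grind C) r).
Proof.
move=> [pP cl] CP; elim: r => [|r IH] /=.
  exists 1, (fun _ => 0) => z; rewrite mul1r big1 ?addr0 // => B _; by rewrite mul0r.
apply: cl => //; exists 0, (fun B => ((B == C) : nat)%:~R) => z.
rewrite mul0r add0r (bigD1 C) //= eqxx mul1r big1 ?addr0 // => B /andP[_ /negbTE ->].
by rewrite mul0r.
Qed.

Lemma mult_prime (gT : finGroupType) (G : {group gT}) (P : {set {set gT}}) q C D z :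
  unital_partition G P -> abelian G -> prime q -> coprime #|G| q ->
  C \in P -> D \in P -> z \in setpow C q -> z \in D -> D \subset setpow C q.
Proof.
move=> uP abG pq cq CP DP zC zD; have pP := uP.1.
have CG : C \subset G by apply: subset_trans (part_sub pP CP) (subsetDl _ _).
have inj : {in G &, injective (fun x => x ^+ q)%g}.
  exact: can_in_inj (expgK cq).
apply/subsetP => w wD.
have e := span_const pP (span_hp q uP CP) DP zD wD.
have := key_mod pq abG CG inj z; rewrite e key_mod // zC.
by case: (w \in _) => //= /eqP; rewrite oner_eq0.
Qed.

Local Open Scope nat_scope.

Definition Mprop (gT : finGroupType) (P : {set {set gT}}) (t : nat) :=
  forall C D z, C \in P -> D \in P -> z \in setpow C t -> z \in D -> D \subset setpow C t.

Lemma setpowM (gT : finGroupType) (C : {set gT}) a b :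
  setpow (setpow C a) b = setpow C (a * b).
Proof.
rewrite /setpow -imset_comp; apply: eq_imset => x /=; by rewrite expgM.
Qed.

Lemma M1 (gT : finGroupType) (G : {group gT}) (P : {set {set gT}}) :
  partition P (G :\ 1%g) -> Mprop P 1.
Proof.
move=> pP C D z CP DP /imsetP[c cC ->] zD; rewrite expg1 in zD.
have tP : trivIset P by case/and3P: pP.
rewrite -(def_pblock tP DP zD) (def_pblock tP CP cC).
by apply/subsetP => x xC; apply/imsetP; exists x; rewrite ?expg1.
Qed.

Lemma M_mul (gT : finGroupType) (G : {group gT}) (P : {set {set gT}}) a b :
  partition P (G :\ 1%g) -> coprime #|G| a -> Mprop P a -> Mprop P b -> Mprop P (a * b).
Proof.
move=> pP ca Ma Mb C D z CP DP; rewrite -setpowM => /imsetP[w wC ->] zD.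
have tP : trivIset P by case/and3P: pP.
have wG1 : w \in G :\ 1%g.
  case/imsetP: wC => c cC ->.
  have /setD1P[c1 cG] := subsetP (part_sub pP CP) c cC.
  apply/setD1P; split; last exact: groupX.
  apply: contra c1 => /eqP e; apply/eqP.
  by rewrite -(expgK ca cG) e expg1n.
have wcov : w \in cover P by rewrite (cover_partition pP).
set E := pblock P w.
have EP : E \in P by exact: pblock_mem.
have wE : w \in E by rewrite mem_pblock.
have EC : E \subset setpow C a := Ma C E w CP EP wC wE.
have zE : (w ^+ b)%g \in setpow E b by apply: imset_f.
apply: subset_trans (Mb E D _ EP DP zE zD) _.
exact: imsetS.
Qed.

Lemma M_all (gT : finGroupType) (G : {group gT}) (P : {set {set gT}}) t :
  unital_partition G P -> abelian G -> 0 < t -> coprime #|G| t -> Mprop P t.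
Proof.
move=> uP abG; have pP := uP.1.
elim: t {-2}t (leqnn t) => [|m IH] t tm t0 ct.
  by move: t0; rewrite leqn0 in tm; rewrite (eqP tm).
case: (ltngtP t 1) => [|t1|->]; first by rewrite ltnS leqn0 => /eqP t00; rewrite t00 in t0.
  have pq := pdiv_prime t1.
  have qd := pdiv_dvd t.
  have -> : t = (pdiv t * (t %/ pdiv t))%N by rewrite mulnC divnK.
  have cq : coprime #|G| (pdiv t) by apply: coprime_dvdr qd ct.
  apply: (M_mul pP cq).
    move=> C D z CP DP zC zD; exact: (mult_prime uP abG pq cq CP DP zC zD).
  have tq0 : 0 < t %/ pdiv t by rewrite divn_gt0 ?prime_gt0 //; exact: dvdn_leq t0 qd.
  apply: IH.
  - rewrite -ltnS; apply: leq_trans tm; exact: ltn_Pdiv (prime_gt1 pq) t0.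
  - exact: tq0.
  - by apply: coprime_dvdr ct; apply: dvdn_div.
exact: M1 pP.
Qed.

Lemma expfix (gT : finGroupType) (x : gT) N a :
  (#[x]%g %| N)%N -> a = 1 %[mod N] -> (x ^+ a)%g = x.
Proof.
move=> oN aN; apply/eqP; rewrite -{2}(expg1 x) eq_expg_mod_order.
by rewrite -(modn_dvdm a oN) aN modn_dvdm.
Qed.

Theorem lemma3p8 (gT : finGroupType) (G : {group gT}) (p n : nat)
  (P : {set {set gT}}) (alpha k u : nat) (A : {set gT}) (y : gT) (i j : nat) :
  prime p -> odd p ->
  cyclic G -> #|G| = p ^ n ->
  unital_partition G P ->
  unit_generator (p ^ n) alpha ->
  A \in P -> y \in A :&: Bset G p k ->
  0 < u -> (y ^+ (alpha ^ u))%g \in A ->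
  (forall m, 0 < m < u -> (y ^+ (alpha ^ m))%g \notin A) ->
  let beta := alpha ^ u in
  let B0 := [set (y ^+ (beta ^ m))%g | m : 'I_(totient (p ^ (n - k)) %/ u)] in
  setpow B0 (alpha ^ j) \subset setpow A (alpha ^ i) ->
  j = i %[mod u].
Proof.
move=> pp _ cG cardG uP [ca _] AP /setIP[yA yB] u0 yu ymin beta B0 sub.
have abG := cyclic_abelian cG; have pP := uP.1.
have AG1 := part_sub pP AP.
have /setD1P[y1 yG] := subsetP AG1 y yA.
have a0 : 0 < alpha.
  rewrite lt0n; apply: contra y1 => /eqP a0; move: ca; rewrite a0 /coprime gcd0n => pn1.
  have := order_dvdG yG; rewrite cardG (eqP pn1) dvdn1 order_eq1; exact.
have cGa e : coprime #|G| (alpha ^ e) by rewrite coprime_sym cardG coprimeXl.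
have Mt e : Mprop P (alpha ^ e) by apply: (M_all uP abG); rewrite ?expn_gt0 ?a0.
have inj e : {in G &, injective (fun x => x ^+ (alpha ^ e))%g}.
  exact: can_in_inj (expgK (cGa e)).
have AA : A \subset setpow A (alpha ^ u).
  have yy : (y ^+ (alpha ^ u))%g \in setpow A (alpha ^ u) by apply/imsetP; exists y.
  exact: (Mt u A A _ AP AP yy yu).
have step d : u <= d -> (y ^+ (alpha ^ d))%g \in A -> (y ^+ (alpha ^ (d - u)))%g \in A.
  move=> ud /(subsetP AA) /imsetP[w wA e].
  have wG : w \in G by have /setD1P[] := subsetP AG1 w wA.
  suff -> : (y ^+ (alpha ^ (d - u)))%g = w by [].
  apply: (inj u) => //; first exact: groupX.
  by rewrite /= -e -expgM -expnD subnK.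
have dvd d : (y ^+ (alpha ^ d))%g \in A -> u %| d.
  move=> yd; have: (y ^+ (alpha ^ (d %% u)))%g \in A.
    move: yd; rewrite {1}(divn_eq d u); elim: (d %/ u) => [|m IH]; first by rewrite mul0n add0n.
    move=> h; apply: IH.
    have ud : u <= m.+1 * u + d %% u by rewrite mulSn -addnA leq_addr.
    by have := step _ ud h; rewrite mulSn -addnA addKn.
  case: (posnP (d %% u)) => [r0 _|r0 yr]; first by rewrite /dvdn r0.
  by move: (ymin (d %% u)); rewrite r0 ltn_pmod // yr => /(_ isT).
have fixG x e : x \in G -> (x ^+ (alpha ^ (totient (p ^ n) * e)))%g = x.
  move=> xG; apply: (expfix (N := p ^ n)); first by rewrite -cardG order_dvdG.
  by rewrite expnM -modnXm Euler_exp_totient // modnXm exp1n.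
have uphi : u %| totient (p ^ n) by apply: dvd; rewrite -{1}(muln1 (totient _)) fixG.
have oy : (#[y]%g %| p ^ (n - k))%N.
  case/imsetP: yB => x; rewrite inE => /andP[xG _] ->.
  rewrite order_dvdn -expgM -expnD; apply/eqP; apply/eqP; rewrite -order_dvdn.
  by apply: dvdn_trans (order_dvdG xG) _; rewrite cardG dvdn_exp2l // -leq_subLR.
have uphik : u %| totient (p ^ (n - k)).
  apply: dvd; rewrite (expfix oy) //; apply: Euler_exp_totient.
  by apply: coprime_dvdr ca; apply: dvdn_exp2l; exact: leq_subr.
have ph0 : 0 < totient (p ^ (n - k)) %/ u.
  by rewrite divn_gt0 // dvdn_leq // totient_gt0 expn_gt0 prime_gt0.
have yB0 : y \in B0 by apply/imsetP; exists (Ordinal ph0); rewrite //= expn0 expg1.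
have : (y ^+ (alpha ^ j))%g \in setpow B0 (alpha ^ j) by apply/imsetP; exists y.
move=> /(subsetP sub) /imsetP[x xA e].
have xG : x \in G by have /setD1P[] := subsetP (part_sub pP AP) x xA.
have phi0 : 0 < totient (p ^ n) by rewrite totient_gt0 expn_gt0 prime_gt0.
have : (y ^+ (alpha ^ (j + i * (totient (p ^ n)).-1)))%g \in A.
  rewrite expnD expgM e -expgM -expnD.
  have -> : i + i * (totient (p ^ n)).-1 = totient (p ^ n) * i.
    by rewrite -{1}(muln1 i) -mulnDr add1n prednK // mulnC.
  by rewrite fixG.
move=> /dvd h.
have E1 : j + i * totient (p ^ n) = i + (j + i * (totient (p ^ n)).-1).
  by rewrite -{1}(prednK phi0) mulnSr [_ + i]addnC addnCA.
have M1 : (j + i * totient (p ^ n)) %% u = j %% u.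
  by case/dvdnP: uphi => c ->; rewrite mulnA addnC modnMDl.
have M2 : (i + (j + i * (totient (p ^ n)).-1)) %% u = i %% u.
  by case/dvdnP: h => c ->; rewrite addnC modnMDl.
by rewrite -M1 E1 M2.
Qed.
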